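(* Assume the demand is i.i.d. with pmf $P_X$. Let $\theta^*$ be a minimizer of $\theta\mapsto I(S-X;X)$ over $\mathcal P_S$ ($X\sim P_X$, $S\sim\theta$ independent), $J^*$ the minimum value, $\xi^*(w)=\sum_{(x,s):s-x=w}P_X(x)\theta^*(s)$, and $b^*(y\mid w)=P_X(y)\theta^*(y+w)/\xi^*(w)$ for $y\in\mathcal X\cap\mathcal Y_\circ(w)$ and $0$ otherwise. Then (1) $\xi^*$ and $\theta^*$ are related by $\xi^*(w)=\sum_{(x,s):s-x=w}P_X(x)\theta^*(s)$; (2) $b^*$ is a structured policy with respect to $(\theta^*,\xi^* )$; (3) if $S_1\sim\theta^*$ and the constant-distribution policy $Y_t\sim b^*(\cdot\mid S_t-X_t)$ is used, the (infinite-horizon) leakage rate equals $J^*$. Thus $J^*$ is achievable.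
   Context: $\mathcal X=\{0,\dots,m_x\}$, $\mathcal Y=\{0,\dots,m_y\}$, $\mathcal S=\{0,\dots,m_s\}$ with $m_x\le m_y$; $\mathcal W=\{s-x:s\in\mathcal S,x\in\mathcal X\}$; $\mathcal P_S$ the pmfs on $\mathcal S$; $\mathcal Y_\circ(w)=\{y\in\mathcal Y:w+y\in\mathcal S\}$. The demand $X_1,X_2,\dots$ is i.i.d. $\sim P_X$, independent of $S_1$. Given $b(y\mid w)$ with $b(\mathcal Y_\circ(w)\mid w)=1$, the constant-distribution policy $b$ draws $Y_t\sim b(\cdot\mid W_t)$, $W_t=S_t-X_t$, and $S_{t+1}=S_t+Y_t-X_t$. Given $\theta\in\mathcal P_S$ and $\xi(w)=\sum_{(x,s):s-x=w}P_X(x)\theta(s)$, a structured policy with respect to $(\theta,\xi)$ is $b(y\mid w)=P_X(y)\theta(y+w)/\xi(w)$ for $y\in\mathcal X\cap\mathcal Y_\circ(w)$ and $0$ otherwise. The leakage rate of a policy is $L_T=\frac1TI(X^T,S_1;Y^T)$, $L_\infty=\limsup_TL_T$. *)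

(* Defs.v *)
From HB Require Import structures.
From mathcomp Require Import all_boot all_order all_algebra.
From mathcomp Require Import all_classical all_reals all_analysis.
Set Implicit Arguments. Unset Strict Implicit. Unset Printing Implicit Defensive.
Import Order.TTheory GRing.Theory Num.Theory.
Local Open Scope ring_scope.

(* Alphabets: X = 'I_mx.+1 = {0..mx}, Y = 'I_my.+1, S = 'I_ms.+1.
   W = {s - x} = {-mx, ..., ms} is represented by the finite type
   'I_(mx + ms).+1, the index i standing for the integer i - mx. *)
Definition Wt (mx ms : nat) := 'I_(mx + ms).+1.
Definition wval (mx ms : nat) (i : Wt mx ms) : int := (i%:Z - mx%:Z)%R.

Definition is_pmf (T : finType) (R : realType) (p : {ffun T -> R}) : Prop :=
  (forall t, 0 <= p t) /\ \sum_(t : T) p t = 1.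

Definition extZ (R : realType) (m : nat) (p : {ffun 'I_m.+1 -> R}) (z : int) : R :=
  match z with
  | Posz n => if (n < m.+1)%N then p (inord n) else 0
  | Negz _ => 0
  end.

Definition MI (R : realType) (A B : finType) (p : A -> B -> R) : R :=
  let pA := fun a => \sum_(b : B) p a b in
  let pB := fun b => \sum_(a : A) p a b in
  \sum_(a : A) \sum_(b : B)
     (if p a b == 0 then 0 else p a b * ln (p a b / (pA a * pB b))).

(* I(S - X ; X) with X ~ PX, S ~ theta independent: joint pmf of (W, X) *)
Definition Jfun (R : realType) (mx ms : nat)
    (PX : {ffun 'I_mx.+1 -> R}) (theta : {ffun 'I_ms.+1 -> R}) : R :=
  MI (fun (w : Wt mx ms) (x : 'I_mx.+1) =>
        PX x * extZ theta (wval w + x%:Z)%R).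

Definition xi (R : realType) (mx ms : nat)
    (PX : {ffun 'I_mx.+1 -> R}) (theta : {ffun 'I_ms.+1 -> R}) (w : int) : R :=
  \sum_(xs : 'I_mx.+1 * 'I_ms.+1 | ((xs.2)%:Z - (xs.1)%:Z == w)%R)
     PX xs.1 * theta xs.2.

(* y in X /\ y in Y_o(w)  (i.e. y <= mx and w + y in S) *)
Definition in_XYo (mx ms my : nat) (w : int) (y : 'I_my.+1) : bool :=
  (y <= mx)%N && (0 <= w + y%:Z)%R && (w + y%:Z <= ms%:Z)%R.

Definition structured (R : realType) (mx ms my : nat)
    (PX : {ffun 'I_mx.+1 -> R}) (theta : {ffun 'I_ms.+1 -> R})
    (xi0 : int -> R) (b : int -> 'I_my.+1 -> R) : Prop :=
  forall (w : int) (y : 'I_my.+1),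
    b w y = if in_XYo mx ms w y
            then extZ PX y%:Z * extZ theta (y%:Z + w)%R / xi0 w
            else 0.

Definition bstar (R : realType) (mx ms my : nat)
    (PX : {ffun 'I_mx.+1 -> R}) (theta : {ffun 'I_ms.+1 -> R})
    (w : int) (y : 'I_my.+1) : R :=
  if in_XYo mx ms w y
  then extZ PX y%:Z * extZ theta (y%:Z + w)%R / xi PX theta w
  else 0.

(* State S_t = S_1 + sum_{k < t} (Y_k - X_k)  (times indexed from 0) *)
Definition stateZ (mx ms my T : nat) (xs : {ffun 'I_T -> 'I_mx.+1})
    (s1 : 'I_ms.+1) (ys : {ffun 'I_T -> 'I_my.+1}) (t : 'I_T) : int :=
  (s1%:Z + \sum_(k < T | (k < t)%N) ((ys k)%:Z - (xs k)%:Z))%R.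

(* Joint pmf of ((X^T, S_1), Y^T) when X_t iid ~ PX, S_1 ~ theta independent,
   and Y_t ~ b(. | W_t), W_t = S_t - X_t, S_{t+1} = S_t + Y_t - X_t. *)
Definition joint (R : realType) (mx ms my T : nat)
    (PX : {ffun 'I_mx.+1 -> R}) (theta : {ffun 'I_ms.+1 -> R})
    (b : int -> 'I_my.+1 -> R)
    (xs1 : {ffun 'I_T -> 'I_mx.+1} * 'I_ms.+1) (ys : {ffun 'I_T -> 'I_my.+1}) : R :=
  theta xs1.2 * \prod_(t < T)
     (PX (xs1.1 t) * b (stateZ xs1.1 xs1.2 ys t - (xs1.1 t)%:Z)%R (ys t)).

Definition leak (R : realType) (mx ms my : nat)
    (PX : {ffun 'I_mx.+1 -> R}) (theta : {ffun 'I_ms.+1 -> R})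
    (b : int -> 'I_my.+1 -> R) (T : nat) : R :=
  MI (joint (my := my) (T := T) PX theta b) / T%:R.

Definition leak_inf (R : realType) (mx ms my : nat)
    (PX : {ffun 'I_mx.+1 -> R}) (theta : {ffun 'I_ms.+1 -> R})
    (b : int -> 'I_my.+1 -> R) : \bar R :=
  limn_esup (fun T => (leak PX theta b T)%:E).

(* Main.v *)
Require Import Defs.
From HB Require Import structures.
From mathcomp Require Import all_boot all_order all_algebra.
From mathcomp Require Import all_classical all_reals all_analysis.
From mathcomp Require Import zify ring lra.
Import Order.TTheory GRing.Theory Num.Theory.
Set Implicit Arguments. Unset Strict Implicit. Unset Printing Implicit Defensive.
Local Open Scope ring_scope.

Lemma sum_if_unique (R : realType) (I : finType) (P : pred I) (i0 : I) (c : R) :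
  P i0 -> (forall i, P i -> i = i0) -> \sum_(i : I) (if P i then c else 0) = c.
Proof.
move=> Pi0 uniq; rewrite (bigD1 i0) //= Pi0 big1 ?addr0 // => i /negbTE ni.
by case: ifP => // /uniq /eqP; rewrite ni.
Qed.

Lemma extZ_sum (R : realType) (m : nat) (p : {ffun 'I_m.+1 -> R}) (z : int) :
  extZ p z = \sum_(i : 'I_m.+1) (if z == i%:Z then p i else 0).
Proof.
case: z => [n|n] /=.
- case: ifP => hn.
  + rewrite -(@sum_if_unique _ _ (fun i : 'I_m.+1 => Posz n == i%:Z) (inord n) (p (inord n))).
    * by apply: eq_bigr => i _; case: eqP => // [[->]]; rewrite inord_val.
    * by rewrite inordK.
    * by move=> i /eqP [->]; rewrite inord_val.
  + rewrite big1 // => i _; case: eqP => // [[ni]].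
    by move: (ltn_ord i); rewrite -ni hn.
- by rewrite big1 // => i _.
Qed.

Lemma extZ_ge0 (R : realType) (m : nat) (p : {ffun 'I_m.+1 -> R}) (z : int) :
  (forall i, 0 <= p i) -> 0 <= extZ p z.
Proof. by move=> h; case: z => [n|n] //=; case: ifP. Qed.

Lemma extZ_ord (R : realType) (m : nat) (p : {ffun 'I_m.+1 -> R}) (i : 'I_m.+1) :
  extZ p i%:Z = p i.
Proof. by rewrite /= ltn_ord inord_val. Qed.

Lemma extZ_out (R : realType) (m : nat) (p : {ffun 'I_m.+1 -> R}) (z : int) :
  (z < 0) || (m%:Z < z) -> extZ p z = 0.
Proof.
case: z => [n|n] //= h; case: ifP => // hn; exfalso; move: h hn; lia.
Qed.

Definition ftail (T : nat) (A : finType) (f : {ffun 'I_T.+1 -> A}) : {ffun 'I_T -> A} :=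
  [ffun i => f (lift ord0 i)].
Definition fcons (T : nat) (A : finType) (a : A) (g : {ffun 'I_T -> A}) : {ffun 'I_T.+1 -> A} :=
  [ffun i => if unlift ord0 i is Some j then g j else a].

Lemma fcons0 T (A : finType) (a : A) (g : {ffun 'I_T -> A}) : fcons a g ord0 = a.
Proof. by rewrite ffunE unlift_none. Qed.

Lemma fconsL T (A : finType) (a : A) (g : {ffun 'I_T -> A}) i : fcons a g (lift ord0 i) = g i.
Proof. by rewrite ffunE liftK. Qed.

Lemma ftail_fcons T (A : finType) (a : A) (g : {ffun 'I_T -> A}) : ftail (fcons a g) = g.
Proof. by apply/ffunP => i; rewrite ffunE fconsL. Qed.

Lemma fcons_eta T (A : finType) (f : {ffun 'I_T.+1 -> A}) : fcons (f ord0) (ftail f) = f.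
Proof.
apply/ffunP => i; rewrite ffunE; case: unliftP => [j ->|->] //.
by rewrite ffunE.
Qed.

Lemma big_ffunS (R : realType) T (A : finType) (F : {ffun 'I_T.+1 -> A} -> R) :
  \sum_(f : {ffun 'I_T.+1 -> A}) F f =
  \sum_(a : A) \sum_(g : {ffun 'I_T -> A}) F (fcons a g).
Proof.
rewrite pair_bigA /=.
rewrite (reindex (fun p : A * {ffun 'I_T -> A} => fcons p.1 p.2)) //.
exists (fun f : {ffun 'I_T.+1 -> A} => (f ord0, ftail f)) => [[a g] _|f _] /=.
  by rewrite fcons0 ftail_fcons.
by rewrite fcons_eta.
Qed.

Definition stZ (T : nat) (mx my : nat) (s : int) (xs : {ffun 'I_T -> 'I_mx.+1})
  (ys : {ffun 'I_T -> 'I_my.+1}) (t : 'I_T) : int :=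
  (s + \sum_(k < T | (k < t)%N) ((ys k)%:Z - (xs k)%:Z))%R.

Lemma stZ0 T mx my s (xs : {ffun 'I_T.+1 -> 'I_mx.+1}) (ys : {ffun 'I_T.+1 -> 'I_my.+1}) :
  stZ s xs ys ord0 = s.
Proof. by rewrite /stZ big_pred0 ?addr0. Qed.

Lemma stZL T mx my s (xs : {ffun 'I_T.+1 -> 'I_mx.+1}) (ys : {ffun 'I_T.+1 -> 'I_my.+1}) t :
  stZ s xs ys (lift ord0 t) =
  stZ (s + (ys ord0)%:Z - (xs ord0)%:Z) (ftail xs) (ftail ys) t.
Proof.
rewrite /stZ big_mkcond big_ord_recl /= -!addrA; congr (_ + _).
rewrite [in RHS]big_mkcond /=; do 2 congr (_ + _); apply: eq_bigr => k _.
by rewrite /bump /= !add1n ltnS !ffunE.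
Qed.

Section S.
Variable R : realType.
Variables mx my ms : nat.
Hypothesis hxy : (mx <= my)%N.
Variable PX : {ffun 'I_mx.+1 -> R}.
Hypothesis hPX : is_pmf PX.
Variable th : {ffun 'I_ms.+1 -> R}.
Hypothesis hth : is_pmf th.

Lemma xiE (z : int) : xi PX th z = \sum_(x : 'I_mx.+1) PX x * extZ th (z + x%:Z).
Proof.
rewrite /xi big_mkcond /=.
rewrite -(pair_bigA _ (fun (x : 'I_mx.+1) (s : 'I_ms.+1) =>
   if s%:Z - x%:Z == z then PX x * th s else 0)) /=.
apply: eq_bigr => x _; rewrite extZ_sum mulr_sumr; apply: eq_bigr => s _.
have -> : (s%:Z - x%:Z == z) = (z + x%:Z == s%:Z).
  by apply/idP/idP => /eqP h; apply/eqP; lia.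
by case: ifP; rewrite ?mulr0.
Qed.


Lemma sum_wval (z : int) (c : R) : (- (mx%:Z) <= z) -> (z <= ms%:Z) ->
  \sum_(w : Wt mx ms) (if wval w == z then c else 0) = c.
Proof.
move=> h1 h2.
have hlt : (absz (z + mx%:Z)%R < (mx + ms).+1)%N by lia.
apply: (@sum_if_unique _ _ (fun w : Wt mx ms => wval w == z) (Ordinal hlt)).
  rewrite /wval /=; apply/eqP; lia.
move=> i /eqP; rewrite /wval => hi; apply/val_inj => /=; lia.
Qed.


Let PX0 : forall x, 0 <= PX x. Proof. by case: hPX. Qed.
Let th0 : forall s, 0 <= th s. Proof. by case: hth. Qed.

Lemma xi_ge0 z : 0 <= xi PX th z.
Proof. by rewrite xiE sumr_ge0 // => x _; rewrite mulr_ge0 // extZ_ge0. Qed.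

Lemma term_le_xi (w : int) (x : 'I_mx.+1) : PX x * extZ th (w + x%:Z) <= xi PX th w.
Proof.
rewrite xiE (bigD1 x) //= lerDl sumr_ge0 // => i _.
by rewrite mulr_ge0 // extZ_ge0.
Qed.

Notation b := (bstar (my:=my) PX th).

Lemma xib (w : int) (y : 'I_my.+1) :
  xi PX th w * b w y = extZ PX y%:Z * extZ th (y%:Z + w).
Proof.
rewrite /bstar; case: ifP => hin.
- have hy : (y < mx.+1)%N by move: hin; rewrite /in_XYo; case/andP => /andP [] h _ _.
  have -> : extZ PX y%:Z = PX (Ordinal hy) by rewrite -(@extZ_ord _ _ PX (Ordinal hy)).
  have -> : y%:Z + w = w + (Ordinal hy)%:Z by rewrite addrC.
  have [h0|hn0] := eqVneq (xi PX th w) 0.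
  + apply/esym/eqP; rewrite h0 mul0r eq_le mulr_ge0 ?extZ_ge0 // andbT.
    by rewrite -h0 term_le_xi.
  + by rewrite mulrC divfK.
- rewrite mulr0; move: hin; rewrite /in_XYo.
  have [hy|hy] := leqP y mx.
  + move=> h; rewrite [extZ th _]extZ_out ?mulr0 //; move: h hy; lia.
  + by rewrite [extZ PX _]extZ_out ?mul0r //; apply/orP; right; lia.
Qed.


Lemma b_ge0 w y : 0 <= b w y.
Proof.
rewrite /bstar; case: ifP => // _.
by rewrite divr_ge0 ?mulr_ge0 ?extZ_ge0 ?xi_ge0.
Qed.

Lemma b_nz w y : b w y != 0 ->
  [/\ xi PX th w != 0, extZ PX y%:Z != 0 & extZ th (y%:Z + w) != 0].
Proof.
move=> hb.
have hxi : xi PX th w != 0.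
  apply: contraNneq hb => h0; rewrite /bstar h0 invr0 mulr0; by case: ifP.
have : extZ PX y%:Z * extZ th (y%:Z + w) != 0 by rewrite -xib mulf_neq0.
by rewrite mulf_eq0 negb_or => /andP [h1 h2]; split.
Qed.

Lemma sumY (G : int -> R) :
  \sum_(y : 'I_my.+1) extZ PX y%:Z * G y%:Z = \sum_(x : 'I_mx.+1) PX x * G x%:Z.
Proof.
under eq_bigr do rewrite extZ_sum mulr_suml.
rewrite exchange_big /=; apply: eq_bigr => x _.
have hx : (x < my.+1)%N by apply: leq_trans (ltn_ord x) _.
rewrite -(@sum_if_unique _ _ (fun y : 'I_my.+1 => y%:Z == x%:Z) (Ordinal hx) (PX x * G x%:Z)).
- apply: eq_bigr => y _; case: eqP => [->|]; first by [].
  by rewrite mul0r.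
- by [].
- by move=> y /eqP [h]; apply/val_inj.
Qed.

Lemma sum_b w : xi PX th w != 0 -> \sum_(y : 'I_my.+1) b w y = 1.
Proof.
move=> hxi.
have -> : \sum_(y : 'I_my.+1) b w y =
   (\sum_(y : 'I_my.+1) extZ PX y%:Z * extZ th (y%:Z + w)) / xi PX th w.
  rewrite mulr_suml; apply: eq_bigr => y _; by rewrite -xib mulrC mulrA mulVf // mul1r.
rewrite (sumY (fun z => extZ th (z + w))).
have -> : \sum_(x : 'I_mx.+1) PX x * extZ th (x%:Z + w) = xi PX th w.
  by rewrite xiE; apply: eq_bigr => x _; rewrite addrC.
by rewrite divff.
Qed.


Lemma regroup (F : int -> R) :
  \sum_(s : 'I_ms.+1) \sum_(x : 'I_mx.+1) th s * PX x * F (s%:Z - x%:Z) =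
  \sum_(w : Wt mx ms) xi PX th (wval w) * F (wval w).
Proof.
have H : forall (s : 'I_ms.+1) (x : 'I_mx.+1), th s * PX x * F (s%:Z - x%:Z) =
   \sum_(w : Wt mx ms) (if wval w == s%:Z - x%:Z then th s * PX x * F (wval w) else 0).
  move=> s x; rewrite -(@sum_wval (s%:Z - x%:Z) (th s * PX x * F (s%:Z - x%:Z))).
  - by apply: eq_bigr => w _; case: eqP => [->|].
  - have := ltn_ord x; lia.
  - have := ltn_ord s; lia.
under eq_bigr => s _ do under eq_bigr => x _ do rewrite H.
under eq_bigr do rewrite exchange_big.
rewrite exchange_big; apply: eq_bigr => w _.
rewrite xiE mulr_suml exchange_big; apply: eq_bigr => x _.
rewrite extZ_sum mulr_sumr mulr_suml; apply: eq_bigr => s _.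
have -> : (wval w == s%:Z - x%:Z) = (wval w + x%:Z == s%:Z).
  by apply/idP/idP => /eqP h; apply/eqP; lia.
by case: ifP => _; [ring | rewrite !mulr0 mul0r].
Qed.


Lemma L1core (y : nat) (h : int -> R) : (y <= mx)%N ->
  \sum_(w : Wt mx ms) extZ th (y%:Z + wval w) * h (wval w + y%:Z) =
  \sum_(s : 'I_ms.+1) th s * h s%:Z.
Proof.
move=> hy.
have H : forall s : 'I_ms.+1, th s * h s%:Z =
   \sum_(w : Wt mx ms) (if wval w == s%:Z - y%:Z then th s * h s%:Z else 0).
  move=> s; rewrite sum_wval //; have := ltn_ord s; lia.
under [RHS]eq_bigr do rewrite H.
rewrite [RHS]exchange_big; apply: eq_bigr => w _.
rewrite extZ_sum mulr_suml; apply: eq_bigr => s _.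
have -> : (wval w == s%:Z - y%:Z) = (y%:Z + wval w == s%:Z).
  by apply/idP/idP => /eqP e; apply/eqP; lia.
case: ifP => [/eqP e|]; last by rewrite mul0r.
by rewrite -e addrC.
Qed.

Lemma stepL (y0 : 'I_my.+1) (h : int -> R) :
  \sum_(s : 'I_ms.+1) \sum_(x : 'I_mx.+1)
     th s * PX x * (b (s%:Z - x%:Z) y0 * h (s%:Z - x%:Z + y0%:Z)) =
  extZ PX y0%:Z * \sum_(s : 'I_ms.+1) th s * h s%:Z.
Proof.
rewrite (regroup (fun w => b w y0 * h (w + y0%:Z))).
under eq_bigr do rewrite mulrA xib -mulrA.
have [hy|hy] := leqP y0 mx.
  by rewrite -mulr_sumr L1core.
rewrite [extZ PX _]extZ_out; last by apply/orP; right; lia.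
by rewrite mul0r big1 // => w _; rewrite !mul0r.
Qed.


Fixpoint Kf (T : nat) : int -> {ffun 'I_T -> 'I_mx.+1} -> {ffun 'I_T -> 'I_my.+1} -> R :=
  match T return int -> {ffun 'I_T -> 'I_mx.+1} -> {ffun 'I_T -> 'I_my.+1} -> R with
  | 0 => fun _ _ _ => 1
  | T'.+1 => fun s xs ys =>
      PX (xs ord0) * b (s - (xs ord0)%:Z) (ys ord0) *
      Kf (s + (ys ord0)%:Z - (xs ord0)%:Z) (ftail xs) (ftail ys)
  end.

Lemma KfS T s x0 (xs : {ffun 'I_T -> 'I_mx.+1}) y0 (ys : {ffun 'I_T -> 'I_my.+1}) :
  Kf s (fcons x0 xs) (fcons y0 ys) =
  PX x0 * b (s - x0%:Z) y0 * Kf (s + y0%:Z - x0%:Z) xs ys.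
Proof. by rewrite /= !fcons0 !ftail_fcons. Qed.

Lemma prodK T s (xs : {ffun 'I_T -> 'I_mx.+1}) (ys : {ffun 'I_T -> 'I_my.+1}) :
  \prod_(t < T) (PX (xs t) * b (stZ s xs ys t - (xs t)%:Z) (ys t)) = Kf s xs ys.
Proof.
elim: T s xs ys => [|T IH] s xs ys; first by rewrite big_ord0.
rewrite big_ord_recl stZ0 /= -IH; congr (_ * _); apply: eq_bigr => t _.
by rewrite stZL !ffunE.
Qed.

Lemma posE (v : R) : 0 <= v -> v != 0 -> 0 < v.
Proof. by move=> h1 h2; rewrite lt0r h1 h2. Qed.

Lemma FactA T s (xs : {ffun 'I_T -> 'I_mx.+1}) : extZ th s != 0 ->
  \sum_(ys : {ffun 'I_T -> 'I_my.+1}) Kf s xs ys = \prod_(t < T) PX (xs t).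
Proof.
elim: T s xs => [|T IH] s xs hs.
  by rewrite big_ord0 sumr_const card_ffun !card_ord expn0.
suff H : forall x0 (xs' : {ffun 'I_T -> 'I_mx.+1}),
    \sum_(ys : {ffun 'I_T.+1 -> 'I_my.+1}) Kf s (fcons x0 xs') ys =
    PX x0 * \prod_(t < T) PX (xs' t).
  by rewrite -(fcons_eta xs) H big_ord_recl fcons0; congr (_ * _); apply: eq_bigr => t _; rewrite fconsL.
move=> x0 xs'; rewrite big_ffunS.
under eq_bigr => y0 _ do under eq_bigr => ys _ do rewrite KfS.
under eq_bigr => y0 _ do rewrite -mulr_sumr.
transitivity (\sum_(y0 : 'I_my.+1) b (s - x0%:Z) y0 * (PX x0 * \prod_(t < T) PX (xs' t))).
  apply: eq_bigr => y0 _.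
  have [hb|hb] := eqVneq (b (s - x0%:Z) y0) 0; first by rewrite hb !mulr0 !mul0r.
  have [_ _ h3] := b_nz hb.
  rewrite IH; first by rewrite mulrCA mulrA.
  by have -> : s + y0%:Z - x0%:Z = y0%:Z + (s - x0%:Z) by lia.
rewrite -mulr_suml.
have [hp|hp] := eqVneq (PX x0) 0; first by rewrite hp !mul0r mulr0.
rewrite sum_b ?mul1r //.
have := term_le_xi (s - x0%:Z) x0; rewrite subrK => hle.
apply: lt0r_neq0; apply: lt_le_trans hle.
by rewrite mulr_gt0 // posE ?extZ_ge0.
Qed.

Lemma FactB T (ys : {ffun 'I_T -> 'I_my.+1}) :
  \sum_(s : 'I_ms.+1) \sum_(xs : {ffun 'I_T -> 'I_mx.+1}) th s * Kf s%:Z xs ys =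
  \prod_(t < T) extZ PX (ys t)%:Z.
Proof.
elim: T ys => [|T IH] ys.
  rewrite big_ord0 -[RHS](proj2 hth); apply: eq_bigr => s _.
  by rewrite /= -mulr_sumr sumr_const card_ffun !card_ord expn0 mulr1.
suff H : forall y0 (ys' : {ffun 'I_T -> 'I_my.+1}),
    \sum_(s : 'I_ms.+1) \sum_(xs : {ffun 'I_T.+1 -> 'I_mx.+1}) th s * Kf s%:Z xs (fcons y0 ys') =
    extZ PX y0%:Z * \prod_(t < T) extZ PX (ys' t)%:Z.
  by rewrite -(fcons_eta ys) H big_ord_recl fcons0; congr (_ * _); apply: eq_bigr => t _; rewrite fconsL.
move=> y0 ys'.
transitivity (\sum_(s : 'I_ms.+1) \sum_(x : 'I_mx.+1) th s * PX x *
   (b (s%:Z - x%:Z) y0 *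
    (fun z => \sum_(xs : {ffun 'I_T -> 'I_mx.+1}) Kf z xs ys') (s%:Z - x%:Z + y0%:Z))).
  apply: eq_bigr => s _; rewrite big_ffunS; apply: eq_bigr => x _.
  rewrite /= !mulr_sumr; apply: eq_bigr => xs _.
  rewrite !fcons0 !ftail_fcons; have -> : s%:Z + y0%:Z - x%:Z = s%:Z - x%:Z + y0%:Z by rewrite addrAC.
  by rewrite !mulrA.
rewrite (stepL y0 (fun z => \sum_(xs : {ffun 'I_T -> 'I_mx.+1}) Kf z xs ys')) /= -IH; congr (_ * _); apply: eq_bigr => s _.
by rewrite mulr_sumr.
Qed.


Lemma Kf_ge0 T s (xs : {ffun 'I_T -> 'I_mx.+1}) ys : 0 <= Kf s xs ys.
Proof.
elim: T s xs ys => [|T IH] s xs ys /=; first exact: ler01.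
by rewrite !mulr_ge0 ?b_ge0.
Qed.

Lemma Knz T s (xs : {ffun 'I_T -> 'I_mx.+1}) ys : Kf s xs ys != 0 ->
  (\prod_(t < T) PX (xs t)) * (\prod_(t < T) extZ PX (ys t)%:Z) != 0.
Proof.
elim: T s xs ys => [|T IH] s xs ys; first by rewrite !big_ord0 mulr1 oner_neq0.
rewrite -(fcons_eta xs) -(fcons_eta ys) KfS !big_ord_recl !fcons0.
under eq_bigr do rewrite fconsL.
under [X in _ * (_ * X)]eq_bigr do rewrite fconsL.
rewrite !mulf_eq0 !negb_or => /andP [/andP [h1 h2] h3].
have [_ h4 _] := b_nz h2.
have := IH _ _ _ h3; rewrite mulf_eq0 negb_or => /andP [h5 h6].
by rewrite h1 h4 h5 h6.
Qed.

Definition Lf T s (xs : {ffun 'I_T -> 'I_mx.+1}) ys :=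
  ln (Kf s xs ys / ((\prod_(t < T) PX (xs t)) * (\prod_(t < T) extZ PX (ys t)%:Z))).

Lemma LfS T s x0 (xs : {ffun 'I_T -> 'I_mx.+1}) y0 ys :
  Kf s (fcons x0 xs) (fcons y0 ys) != 0 ->
  Lf s (fcons x0 xs) (fcons y0 ys) =
  ln (b (s - x0%:Z) y0 / extZ PX y0%:Z) + Lf (s + y0%:Z - x0%:Z) xs ys.
Proof.
move=> hK; have hP := Knz hK; move: hK hP.
rewrite /Lf KfS !big_ord_recl !fcons0.
under eq_bigr do rewrite fconsL.
under [X in _ * (_ * X)]eq_bigr do rewrite fconsL.
set P := PX x0; set B := b _ _; set K := Kf _ _ _; set A := \prod_(t < T) _.
set Y := extZ PX _; set C := \prod_(t < T) _.
rewrite !mulf_eq0 !negb_or => /andP [/andP [hP hB] hK] /andP [/andP [_ hA] /andP [hY hC]].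
have hB0 : 0 <= B by apply: b_ge0.
have hK0 : 0 <= K by apply: Kf_ge0.
have hA0 : 0 <= A by apply: prodr_ge0 => t _.
have hC0 : 0 <= C by apply: prodr_ge0 => t _; apply: extZ_ge0.
have hY0 : 0 <= Y by apply: extZ_ge0.
have -> : P * B * K / (P * A * (Y * C)) = (B / Y) * (K / (A * C)).
  by field; rewrite ?hP ?hA ?hY ?hC.
rewrite lnM // posrE; first by rewrite divr_gt0 // posE.
apply: divr_gt0; [exact: posE | apply: mulr_gt0; exact: posE].
Qed.


Lemma sum_prodPX T : \sum_(xs : {ffun 'I_T -> 'I_mx.+1}) \prod_(t < T) PX (xs t) = 1.
Proof.
rewrite -(bigA_distr_bigA (fun (t : 'I_T) (x : 'I_mx.+1) => PX x)) /=.
by rewrite big1 // => t _; case: hPX.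
Qed.

Lemma sumPXY : \sum_(y : 'I_my.+1) extZ PX y%:Z = 1.
Proof.
have := sumY (fun _ => 1); under eq_bigr do rewrite mulr1.
by move=> ->; under eq_bigr do rewrite mulr1; case: hPX.
Qed.

Definition M T := \sum_(s : 'I_ms.+1) \sum_(xs : {ffun 'I_T -> 'I_mx.+1})
  \sum_(ys : {ffun 'I_T -> 'I_my.+1}) th s * Kf s%:Z xs ys * Lf s%:Z xs ys.

Definition Jb := \sum_(y : 'I_my.+1) \sum_(w : Wt mx ms)
  xi PX th (wval w) * (b (wval w) y * ln (b (wval w) y / extZ PX y%:Z)).

Lemma MS T : M T.+1 = Jb + M T.
Proof.
pose SK z := \sum_(xs : {ffun 'I_T -> 'I_mx.+1}) \sum_(ys : {ffun 'I_T -> 'I_my.+1}) Kf z xs ys.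
pose SL z := \sum_(xs : {ffun 'I_T -> 'I_mx.+1}) \sum_(ys : {ffun 'I_T -> 'I_my.+1})
   Kf z xs ys * Lf z xs ys.
transitivity (\sum_(s : 'I_ms.+1) \sum_(x0 : 'I_mx.+1) \sum_(y0 : 'I_my.+1)
   th s * PX x0 * (b (s%:Z - x0%:Z) y0 *
     (ln (b (s%:Z - x0%:Z) y0 / extZ PX y0%:Z) * SK (s%:Z + y0%:Z - x0%:Z)
      + SL (s%:Z + y0%:Z - x0%:Z)))).
  rewrite /M; apply: eq_bigr => s _; rewrite big_ffunS; apply: eq_bigr => x0 _.
  under eq_bigr => xs _ do rewrite big_ffunS.
  rewrite exchange_big; apply: eq_bigr => y0 _.
  symmetry; rewrite /SK /SL mulr_sumr -big_split mulr_sumr mulr_sumr.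
  apply: eq_bigr => xs _.
  rewrite mulr_sumr -big_split mulr_sumr mulr_sumr; apply: eq_bigr => ys _.
  symmetry.
  set L := Lf _ xs ys; set K := Kf _ xs ys; set r := ln _.
  have -> : th s * PX x0 * (b (s%:Z - x0%:Z) y0 * (r * K + K * L)) =
            th s * (PX x0 * b (s%:Z - x0%:Z) y0 * K) * (r + L) by ring.
  rewrite -KfS; have [h0|hn] := eqVneq (Kf s%:Z (fcons x0 xs) (fcons y0 ys)) 0.
    by rewrite h0 mulr0 !mul0r.
  by rewrite LfS.
transitivity (\sum_(y0 : 'I_my.+1) \sum_(s : 'I_ms.+1) \sum_(x0 : 'I_mx.+1)
     th s * PX x0 * (b (s%:Z - x0%:Z) y0 * ln (b (s%:Z - x0%:Z) y0 / extZ PX y0%:Z)) +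
   \sum_(y0 : 'I_my.+1) \sum_(s : 'I_ms.+1) \sum_(x0 : 'I_mx.+1)
     th s * PX x0 * (b (s%:Z - x0%:Z) y0 * SL (s%:Z - x0%:Z + y0%:Z))).
  under eq_bigr do rewrite exchange_big.
  rewrite exchange_big -big_split; apply: eq_bigr => y0 _.
  rewrite -big_split; apply: eq_bigr => s _.
  rewrite -big_split; apply: eq_bigr => x0 _.
  have -> : s%:Z - x0%:Z + y0%:Z = s%:Z + y0%:Z - x0%:Z by rewrite addrAC.
  have [h0|hn] := eqVneq (b (s%:Z - x0%:Z) y0) 0.
    by rewrite /= h0 !mul0r !mulr0 addr0.
  have [_ _ h3] := b_nz hn.
  have -> : SK (s%:Z + y0%:Z - x0%:Z) = 1.
    rewrite /SK -[RHS](sum_prodPX T); apply: eq_bigr => xs _; apply: FactA.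
    by have -> : s%:Z + y0%:Z - x0%:Z = y0%:Z + (s%:Z - x0%:Z) by lia.
  by rewrite /= mulr1 mulrDr mulrDr.
congr (_ + _).
  by rewrite /Jb; apply: eq_bigr => y0 _; rewrite (regroup (fun w => b w y0 * ln (b w y0 / extZ PX y0%:Z))).
under eq_bigr do rewrite (stepL _ SL).
rewrite -mulr_suml sumPXY mul1r /M; apply: eq_bigr => s _.
rewrite /SL !mulr_sumr; apply: eq_bigr => xs _.
rewrite !mulr_sumr; apply: eq_bigr => ys _.
by rewrite mulrA.
Qed.


Lemma M0 : M 0 = 0.
Proof.
rewrite /M big1 // => s _; rewrite big1 // => xs _; rewrite big1 // => ys _.
by rewrite /Lf !big_ord0 /= !(mulr1, divr1, ln1, mulr0).
Qed.

Lemma MT T : M T = T%:R * Jb.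
Proof.
elim: T => [|T IH]; first by rewrite M0 mul0r.
by rewrite MS IH -[in RHS](add1n T) natrD mulrDl mul1r.
Qed.

Lemma Jb_eq : Jb = Jfun PX th.
Proof.
rewrite /Jfun /MI /Jb.
transitivity (\sum_(y : 'I_my.+1) \sum_(w : Wt mx ms)
   extZ PX y%:Z * (extZ th (y%:Z + wval w) * ln (extZ th (y%:Z + wval w) / xi PX th (wval w)))).
  apply: eq_bigr => y _; apply: eq_bigr => w _.
  rewrite mulrA xib mulrA.
  have [h0|hn] := eqVneq (extZ PX y%:Z * extZ th (y%:Z + wval w)) 0.
    by rewrite h0 !mul0r.
  congr (_ * ln _).
  have hb : b (wval w) y != 0.
    by apply: contraNneq hn => h; rewrite -xib h mulr0.
  have [hxi hPy _] := b_nz hb.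
  have := xib (wval w) y => e.
  have -> : b (wval w) y = extZ PX y%:Z * extZ th (y%:Z + wval w) / xi PX th (wval w).
    by rewrite -e [xi _ _ _ * _]mulrC mulfK.
  by rewrite -!mulrA mulrC -!mulrA mulrCA mulVf // mulr1 mulrC.
rewrite exchange_big; apply: eq_bigr => w _.
rewrite (sumY (fun z => extZ th (z + wval w) * ln (extZ th (z + wval w) / xi PX th (wval w)))).
apply: eq_bigr => x _ /=.
have -> : \sum_(x0 : 'I_mx.+1) PX x0 * extZ th (wval w + x0%:Z) = xi PX th (wval w).
  by rewrite xiE.
have -> : \sum_(w0 : Wt mx ms) PX x * extZ th (wval w0 + x%:Z) = PX x.
  rewrite -mulr_sumr.
  have := L1core (fun _ => 1) (ltn_ord x : (x <= mx)%N).
  under eq_bigr do rewrite mulr1; under [X in _ = X -> _]eq_bigr do rewrite mulr1.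
  case: hth => _ ->; under eq_bigr do rewrite addrC.
  by move=> ->; rewrite mulr1.
rewrite [x%:Z + _]addrC.
have [h0|hn] := eqVneq (PX x * extZ th (wval w + x%:Z)) 0.
  by rewrite mulrA h0 mul0r.
rewrite mulrA; congr (_ * ln _).
move: hn; rewrite mulf_eq0 negb_or => /andP [hP ht].
by rewrite [xi _ _ _ * _]mulrC invfM mulrACA divff // mul1r.
Qed.

Lemma joint_K T (xs : {ffun 'I_T -> 'I_mx.+1}) (s1 : 'I_ms.+1) ys :
  joint PX th b (xs, s1) ys = th s1 * Kf s1%:Z xs ys.
Proof. by rewrite /joint -prodK. Qed.

Lemma MI_joint T : MI (joint (my := my) (T := T) PX th b) = M T.
Proof.
rewrite /MI.
rewrite -(pair_bigA _ (fun (xs : {ffun 'I_T -> 'I_mx.+1}) (s1 : 'I_ms.+1) =>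
  \sum_(ys : {ffun 'I_T -> 'I_my.+1})
   (if joint PX th b (xs, s1) ys == 0 then 0
    else joint PX th b (xs, s1) ys * ln (joint PX th b (xs, s1) ys /
      ((\sum_(b0 : {ffun 'I_T -> 'I_my.+1}) joint PX th b (xs, s1) b0) *
       (\sum_(a : {ffun 'I_T -> 'I_mx.+1} * 'I_ms.+1) joint PX th b a ys)))))) /=.
rewrite exchange_big /M; apply: eq_bigr => s _; apply: eq_bigr => xs _; apply: eq_bigr => ys _.
have -> : \sum_(a : {ffun 'I_T -> 'I_mx.+1} * 'I_ms.+1) joint PX th b a ys =
          \prod_(t < T) extZ PX (ys t)%:Z.
  rewrite -FactB -(pair_bigA _ (fun xs s => joint PX th b (xs, s) ys)) exchange_big /=.
  by apply: eq_bigr => s1 _; apply: eq_bigr => xs1 _; rewrite joint_K.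
under eq_bigr do rewrite joint_K.
rewrite joint_K -mulr_sumr.
have [h0|hn] := eqVneq (th s * Kf s%:Z xs ys) 0; first by rewrite h0 !mul0r.
rewrite (FactA xs); last first.
  by rewrite extZ_ord; move: hn; rewrite mulf_eq0 negb_or => /andP [].
move: hn; rewrite mulf_eq0 negb_or => /andP [ht _].
rewrite /Lf; congr (_ * ln _); by rewrite -[X in _ / X]mulrA invfM mulrACA divff // mul1r.
Qed.

Lemma leak_eq T : (0 < T)%N -> leak PX th b T = Jfun PX th.
Proof.
move=> hT; rewrite /leak MI_joint MT -Jb_eq mulrC mulKf //.
by rewrite pnatr_eq0 -lt0n.
Qed.

Lemma leak_inf_eq : leak_inf PX th b = (Jfun PX th)%:E.
Proof.
rewrite /leak_inf; apply: (cvg_limn_einf_sup _).2.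
apply: cvg_near_cst; exists 1%N => // n /= hn.
by rewrite leak_eq.
Qed.

End S.

Unset Implicit Arguments.

Theorem proposition3 (R : realType) (mx my ms : nat) (hxy : (mx <= my)%N)
    (PX : {ffun 'I_mx.+1 -> R}) (hPX : is_pmf PX)
    (thetas : {ffun 'I_ms.+1 -> R}) (hth : is_pmf thetas)
    (hmin : forall theta : {ffun 'I_ms.+1 -> R},
              is_pmf theta -> Jfun PX thetas <= Jfun PX theta) :
  let Jstar := Jfun PX thetas in
  let xistar := xi PX thetas in
  let bst := bstar (my := my) PX thetas in
  [/\ (forall w : int, xistar w =
         \sum_(xs : 'I_mx.+1 * 'I_ms.+1 | ((xs.2)%:Z - (xs.1)%:Z == w)%R)
            PX xs.1 * thetas xs.2),
      structured PX thetas xistar bst &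
      leak_inf PX thetas bst = (Jstar)%:E].
Proof.
move=> Jstar xistar bst; split.
- by [].
- by [].
- exact: (leak_inf_eq hxy hPX hth).
Qed.
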